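(* Let $G$ be a tree with negative definite intersection matrix, $\mathcal N$ its set of nodes (vertices of degree $\ge 3$), and $x$ the Laufer operator with respect to $\mathcal N$. Let $n\in\mathcal N$ and let $v_1,\dots,v_s$ ($s\ge1$) be a chain of non-node vertices with $v_1$ adjacent to $n$, $v_j$ adjacent to $v_{j+1}$, of one of two types: (a) a bamboo: each $v_j$ has degree $2$ and $v_s$ is adjacent to a node $n'\neq n$; or (b) a leg: $v_s$ has degree $1$ and $v_1,\dots,v_{s-1}$ have degree $2$. Assume $b_{v_j}\ge2$ for all $j$, except that in case (b) with $s=1$ also $b_{v_1}=1$ is allowed. Let $\alpha$ be the determinant of the negative of the intersection matrix of $\{v_1,\dots,v_s\}$ and $\beta$ that of $\{v_2,\dots,v_s\}$ (with $\beta=1$ if $s=1$), so $\alpha/\beta=[b_{v_1},\dots,b_{v_s}]$. If $Z\in L$ satisfies $x(Z)=Z$, then $$m_{v_1}(Z)=\left\lceil\frac{\beta\,m_n(Z)+m_{n'}(Z)}{\alpha}\right\rceil,$$ where in case (b) one sets $m_{n'}(Z)=0$.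
   Context: $L=\bigoplus_v\mathbb ZE_v$ with $(E_v,E_w)$ = number of edges for $v\ne w$ and $(E_v,E_v)=-b_v$; $m_v(Z)$ is the coefficient of $E_v$ in $Z$. The Laufer operator $x(Z)$ is the unique coefficientwise-minimal $Z''\in L$ with $m_n(Z'')=m_n(Z)$ for all nodes $n$ and $(Z'',E_v)\le0$ for all non-node vertices $v$. $[b_1,\dots,b_s]=b_1-1/(b_2-1/(\cdots-1/b_s))$ is the negative continued fraction. *)

(* Defs.v *)
From HB Require Import structures.
From mathcomp Require Import all_boot all_order all_algebra.
Set Implicit Arguments. Unset Strict Implicit. Unset Printing Implicit Defensive.
Import Order.TTheory GRing.Theory Num.Theory.
Local Open Scope ring_scope.

(* A plumbing graph: a finite simple graph on the vertex type V given by a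
   symmetric irreflexive adjacency relation e, with Euler numbers b : V -> int.
   The lattice L = \bigoplus_v Z E_v is represented by functions V -> int,
   m_v(Z) = Z v. *)

Definition simple_graph (V : finType) (e : rel V) : Prop :=
  symmetric e /\ irreflexive e.

(* a tree: connected with #|V| - 1 (unordered) edges *)
Definition is_tree (V : finType) (e : rel V) : Prop :=
  simple_graph e /\ (forall u w : V, connect e u w) /\
  #|[set p : V * V | e p.1 p.2]| = (2 * (#|V| - 1))%N.

Definition deg (V : finType) (e : rel V) (v : V) : nat := #|[set w | e v w]|.

Definition is_node (V : finType) (e : rel V) (v : V) : bool := (3 <= deg e v)%N.

Definition imat (V : finType) (e : rel V) (b : V -> int) (v w : V) : int :=
  if v == w then - b v else (e v w)%:R.

Definition iform (V : finType) (e : rel V) (b : V -> int) (Z Z' : V -> int) : int :=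
  \sum_(v : V) \sum_(w : V) Z v * Z' w * imat e b v w.

Definition iformE (V : finType) (e : rel V) (b : V -> int) (Z : V -> int) (v : V) : int :=
  \sum_(w : V) Z w * imat e b w v.

Definition neg_definite (V : finType) (e : rel V) (b : V -> int) : Prop :=
  forall Z : V -> int, (exists v, Z v != 0) -> iform e b Z Z < 0.

Definition laufer_admissible (V : finType) (e : rel V) (b : V -> int)
    (Z Z'' : V -> int) : Prop :=
  (forall n, is_node e n -> Z'' n = Z n) /\
  (forall v, ~~ is_node e v -> iformE e b Z'' v <= 0).

Definition is_laufer (V : finType) (e : rel V) (b : V -> int) (Z Z'' : V -> int) : Prop :=
  laufer_admissible e b Z Z'' /\
  (forall Z', laufer_admissible e b Z Z' -> forall v, Z'' v <= Z' v).

Definition chain_det (V : finType) (e : rel V) (b : V -> int) (s : nat) (v : nat -> V) : int :=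
  \det (\matrix_(i < s, j < s) (- imat e b (v i) (v j))).

(* The chain v_1, ..., v_s is represented 0-indexed as v 0, ..., v (s-1).
   n' = Some n'' : case (a), a bamboo from n to the node n'';
   n' = None     : case (b), a leg. *)
Definition chain_hyp (V : finType) (e : rel V) (b : V -> int) (n : V) (n' : option V)
    (s : nat) (v : nat -> V) : Prop :=
  [/\ (0 < s)%N, {in [pred j | (j < s)%N] &, injective v},
      e n (v 0%N),
      (forall j, (j.+1 < s)%N -> e (v j) (v j.+1)) &
      match n' with
      | Some n'' =>
          [/\ forall j, (j < s)%N -> deg e (v j) = 2%N,
              e (v s.-1) n'', is_node e n'', n'' != n &
              forall j, (j < s)%N -> 2 <= b (v j)]
      | None =>
          [/\ forall j, (j.+1 < s)%N -> deg e (v j) = 2%N,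
              deg e (v s.-1) = 1%N &
              forall j, (j < s)%N -> (2 <= b (v j)) || ((s == 1%N) && (b (v j) == 1))]
      end].

(* Main.v *)
Require Import Defs.
From HB Require Import structures.
From mathcomp Require Import all_boot all_order all_algebra.
From mathcomp Require Import zify ring lra.
Set Implicit Arguments. Unset Strict Implicit. Unset Printing Implicit Defensive.
Import Order.TTheory GRing.Theory Num.Theory.
Local Open Scope ring_scope.

Fixpoint cd (s : nat) (bs : nat -> int) : int :=
  match s with
  | 0%N => 1
  | 1%N => bs 0%N
  | (s'.+1 as s1).+1 => bs 0%N * cd s1 (fun j => bs j.+1) - cd s' (fun j => bs j.+2)
  end.

Definition tri (s : nat) (bs : nat -> int) : 'M[int]_s :=
  \matrix_(i < s, j < s) (if (i == j :> nat) then bs i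
     else if (i.+1 == j)%N || (j.+1 == i)%N then -1 else 0).

Lemma cdSS s bs : cd s.+2 bs = bs 0%N * cd s.+1 (fun j => bs j.+1) - cd s (fun j => bs j.+2).
Proof. by []. Qed.

Lemma cd0 (bs : nat -> int) : cd 0 bs = 1. Proof. by []. Qed.
Lemma cd1 (bs : nat -> int) : cd 1 bs = bs 0%N. Proof. by []. Qed.

Lemma det_tri s bs : \det (tri s bs) = cd s bs.
Proof.
elim: s {-2}s (leqnn s) bs => [|m IH] s hs bs.
  by case: s hs => // _; rewrite det_mx00.
case: s hs => [|[|s]] hs.
- by rewrite det_mx00.
- by rewrite det_mx11 /tri mxE.
rewrite cdSS -(IH s.+1) -?(IH s) //; try lia.
rewrite (expand_det_row _ ord0) 2!big_ord_recl big1 ?addr0; last first.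
  by move=> i _; rewrite /tri mxE /= mul0r.
rewrite /cofactor {1 2}/tri !mxE /= expr0 mul1r.
have -> : row' ord0 (col' ord0 (tri s.+2 bs)) = tri s.+1 (fun j => bs j.+1).
  by apply/matrixP => i j; rewrite !mxE.
set B := row' ord0 (col' (lift ord0 ord0) _).
rewrite (expand_det_col B ord0) big_ord_recl big1 ?addr0; last first.
  move=> i _; rewrite /B !mxE /=.
  by case: i => i hi /=; rewrite mul0r.
rewrite /cofactor /B !mxE /= expr0 mul1r.
have -> : row' ord0 (col' ord0 (row' ord0 (col' (lift ord0 ord0) (tri s.+2 bs))))
   = tri s (fun j => bs j.+2).
  by apply/matrixP => i j; rewrite !mxE.
rewrite /bump /= expr1; ring.
Qed.

Definition hb (s : nat) (bs : nat -> int) :=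
  forall j, (j < s)%N -> (2 <= bs j) || ((s == 1%N) && (bs j == 1)).

Lemma cd_pos s (bs : nat -> int) : (forall j, (j < s)%N -> 2 <= bs j) ->
  0 < cd s bs /\ cd s.-1 (fun j => bs j.+1) <= cd s bs.
Proof.
elim: s bs => [|s IH] bs h; first by [].
case: s IH h => [|s] IH h.
  have := h 0%N isT => h0; rewrite cd0 cd1; split; lia.
have [h1 h2] := IH (fun j => bs j.+1) (fun j hj => h j.+1 hj).
rewrite cdSS.
have h0 := h 0%N isT.
have : 2 * cd s.+1 (fun j => bs j.+1) <= bs 0%N * cd s.+1 (fun j => bs j.+1).
  by apply: ler_wpM2r; lia.
change (s.+2.-1) with s.+1; change (s.+1.-1) with s in h2.
set A := cd s.+1 _ in h1 h2 *; set B := cd s _ in h2 *.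
lia.
Qed.

Lemma hb_tail s (bs : nat -> int) : hb s.+2 bs -> forall j, (j < s.+2)%N -> 2 <= bs j.
Proof. by move=> h j hj; have := h j hj; rewrite /= orbF. Qed.

Definition feas (s : nat) (bs : nat -> int) (y : nat -> int) :=
  forall j, (j < s)%N -> y j + y j.+2 <= bs j * y j.+1.

Lemma lower s (bs y : nat -> int) : hb s.+1 bs -> feas s.+1 bs y ->
  cd s (fun j => bs j.+1) * y 0%N + y s.+2 <= cd s.+1 bs * y 1%N.
Proof.
elim: s bs y => [|s IH] bs y hbs hf.
  by have := hf 0%N isT; rewrite /= mul1r.
have h2 := hb_tail hbs.
have := IH (fun j => bs j.+1) (fun j => y j.+1) (fun j (hj : (j < s.+1)%N) => introT orP (or_introl (h2 j.+1 hj)))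
  (fun j (hj : (j < s.+1)%N) => hf j.+1 hj).
have [hp _] := cd_pos (fun j (hj : (j < s.+1)%N) => h2 j.+1 hj).
have hf0 := hf 0%N isT.
have hm := ler_wpM2l (ltW hp) hf0.
rewrite cdSS. set A := cd s.+1 _ in hp hm *. set B := cd s _. nia.
Qed.

Lemma ceil_le_frac (m d k : int) : 0 < d ->
  (Num.ceil (m%:~R / d%:~R : rat) <= k) = (m <= k * d).
Proof.
move=> hd; rewrite ceil_le_int ler_pdivrMr ?ltr0z // -intrM ler_int //.
Qed.

Lemma ceil_ge_frac (m d : int) : 0 < d ->
  m <= Num.ceil (m%:~R / d%:~R : rat) * d.
Proof. by move=> hd; rewrite -ceil_le_frac. Qed.

Lemma achieve s (bs : nat -> int) (a c : int) : hb s.+1 bs ->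
  exists y : nat -> int, [/\ feas s.+1 bs y, y 0%N = a, y s.+2 = c &
    y 1%N = Num.ceil ((cd s (fun j => bs j.+1) * a + c)%:~R / (cd s.+1 bs)%:~R : rat)].
Proof.
elim: s bs a c => [|s IH] bs a c hbs.
  have hb0 : 0 < bs 0%N.
    by have := hbs 0%N isT => /orP [h|/andP [_ /eqP ->]] //; lia.
  set x := Num.ceil _.
  exists (fun k => if k is 0%N then a else if k is 1%N then x else c); split => //.
  move=> j; rewrite ltnS leqn0 => /eqP -> /=.
  have := ceil_ge_frac (cd 0 (fun j => bs j.+1) * a + c) hb0.
  rewrite /x cd0 cd1 mul1r mulrC; lia.
have h2 := hb_tail hbs.
have [hp' _] := cd_pos (fun j (hj : (j < s.+1)%N) => h2 j.+1 hj).
have [hp hq] := cd_pos h2.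
set x1 := Num.ceil _.
have [y' [hf' e0 e1 e2]] := IH (fun j => bs j.+1) x1 c
  (fun j (hj : (j < s.+1)%N) => introT orP (or_introl (h2 j.+1 hj))).
exists (fun k => if k is k'.+1 then y' k' else a); split => //.
case=> [|j] hj; last exact: hf' j hj.
rewrite /= e0 e2.
have := ceil_ge_frac (cd s.+1 (fun j => bs j.+1) * a + c) hp.
rewrite -/x1 cdSS => H.
have : Num.ceil ((cd s (fun j => bs j.+2) * x1 + c)%:~R / (cd s.+1 (fun j => bs j.+1))%:~R : rat)
   <= bs 0%N * x1 - a.
  rewrite ceil_le_frac //.
  set A := cd s.+1 _ in hp' H *; set B := cd s _ in H *.
  nia.
lia.
Qed.

Lemma nbr2 (V : finType) (e : rel V) (w l r : V) :
  deg e w = 2%N -> e w l -> e w r -> l != r -> forall u, e w u = (u == l) || (u == r).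
Proof.
move=> hd hl hr hlr.
have H : [set l; r] == [set u | e w u].
  rewrite eqEcard; apply/andP; split.
    by apply/subsetP => u; rewrite !inE => /orP [/eqP->|/eqP->].
  by rewrite cards2 hlr -/(deg e w) hd.
move/eqP: H => H u.
by have := congr1 (fun A : {set V} => u \in A) H; rewrite !inE => <-.
Qed.

Lemma nbr1 (V : finType) (e : rel V) (w l : V) :
  deg e w = 1%N -> e w l -> forall u, e w u = (u == l).
Proof.
move=> hd hl.
have H : [set l] == [set u | e w u].
  rewrite eqEcard; apply/andP; split.
    by apply/subsetP => u; rewrite !inE => /eqP->.
  by rewrite cards1 -/(deg e w) hd.
move/eqP: H => H u.
by have := congr1 (fun A : {set V} => u \in A) H; rewrite !inE => <-.
Qed.

Lemma deg_le2 (V : finType) (e : rel V) (b : V -> int) n n' s (v : nat -> V) :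
  chain_hyp e b n n' s v -> forall j, (j < s)%N -> (deg e (v j) <= 2)%N.
Proof.
case: n' => [n''|] [hs hinj hn0 hadj hc] j hj.
  by case: hc => hd _ _ _ _; rewrite hd.
case: hc => hd hl _.
case: (ltnP j.+1 s) => h; first by rewrite hd.
have -> : j = s.-1 by lia.
by rewrite hl.
Qed.

Lemma notnode (V : finType) (e : rel V) (b : V -> int) n n' s (v : nat -> V) :
  chain_hyp e b n n' s v -> forall j, (j < s)%N -> ~~ is_node e (v j).
Proof. by move=> hc j hj; rewrite /is_node -ltnNge ltnS (deg_le2 hc). Qed.

Lemma node_neq (V : finType) (e : rel V) (b : V -> int) n n' s (v : nat -> V) w :
  chain_hyp e b n n' s v -> is_node e w -> forall j, (j < s)%N -> v j != w.
Proof.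
move=> hc hw j hj; apply/eqP => E.
by have := notnode hc hj; rewrite E hw.
Qed.

Definition lft (V : Type) (n : V) (v : nat -> V) j := if j is j'.+1 then v j' else n.
Definition ro (V : Type) (n' : option V) s (v : nat -> V) j :=
  if (j.+1 < s)%N then Some (v j.+1) else n'.

Lemma nbr (V : finType) (e : rel V) (b : V -> int) n n' s (v : nat -> V) :
  symmetric e -> is_node e n -> chain_hyp e b n n' s v ->
  forall j, (j < s)%N -> forall u,
    e (v j) u = (u == lft n v j) || (if ro n' s v j is Some r then u == r else false).
Proof.
move=> hsym hnd hc j hj.
have hc' := hc.
case: hc' => hs hinj hn0 hadj hcase.
have hl : e (v j) (lft n v j).
  case: j hj => [|j] hj /=; first by rewrite hsym.
  by rewrite hsym; apply: hadj.
rewrite /ro; case: (ltnP j.+1 s) => hj1.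
  have hd : deg e (v j) = 2%N.
    by case: n' hc hcase => [n''|] hc [hd *]; apply: hd.
  apply: nbr2 => //; first exact: hadj.
  case: j hj hl hj1 {hd} => [|j] hj hl hj1 /=.
    by rewrite eq_sym (node_neq hc hnd hj1).
  apply/eqP => /(hinj _ _ (ltnW hj) hj1) /eqP; lia.
have ej : j = s.-1 by lia.
case: n' hc hcase => [n''|] hc hcase.
  case: hcase => hd hle hnd' hneq _.
  apply: nbr2 => //; first exact: hd.
    by rewrite ej.
  case: j hj hl hj1 ej => [|j] hj hl hj1 ej /=; first by rewrite eq_sym.
  by rewrite (node_neq hc hnd') //; lia.
case: hcase => _ hd _.
move=> u /=; rewrite orbF; move: u; apply: nbr1 => //; by rewrite ej.
Qed.

Lemma lr_neq (V : finType) (e : rel V) (b : V -> int) n n' s (v : nat -> V) :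
  is_node e n -> chain_hyp e b n n' s v ->
  forall j r, (j < s)%N -> ro n' s v j = Some r -> lft n v j != r.
Proof.
move=> hnd hc j r hj.
have hc' := hc.
case: hc' => hs hinj hn0 hadj hcase.
rewrite /ro; case: (ltnP j.+1 s) => hj1.
  case=> <-.
  case: j hj hj1 => [|j] hj hj1 /=.
    by rewrite eq_sym (node_neq hc hnd hj1).
  apply/eqP => /(hinj _ _ (ltnW hj) hj1) /eqP; lia.
have ej : j = s.-1 by lia.
case: n' hc hcase => [n''|] hc hcase //.
case=> <-.
case: hcase => hd hle hnd' hneq _.
case: j hj hj1 ej => [|j] hj hj1 ej /=; first by rewrite eq_sym.
by rewrite (node_neq hc hnd') //; lia.
Qed.

Lemma iformE_nbr (V : finType) (e : rel V) (b : V -> int) (W : V -> int) w :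
  irreflexive e -> iformE e b W w = - b w * W w + \sum_(u | e u w) W u.
Proof.
move=> hirr; rewrite /iformE (bigD1 w) //= /imat eqxx mulrN mulrC.
congr (_ + _); first by rewrite mulNr.
rewrite [RHS]big_mkcond [LHS]big_mkcond; apply: eq_bigr => u _.
case: (eqVneq u w) => [->|h] /=; first by rewrite hirr.
by case: (e u w); rewrite ?mulr1 ?mulr0.
Qed.

Lemma sum2 (V : finType) (W : V -> int) l r : l != r ->
  \sum_(u | (u == l) || (u == r)) W u = W l + W r.
Proof.
move=> hlr; rewrite (bigD1 l) ?eqxx //=; congr (_ + _).
rewrite (eq_bigl (fun u => u == r)) ?big_pred1_eq // => u.
by case: (eqVneq u l) => [->|] /=; rewrite ?andbF ?andbT // (negPf hlr).
Qed.

Definition yW (V : Type) (n : V) (n' : option V) s (v : nat -> V) (W : V -> int) (k : nat) : int :=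
  match k with
  | 0%N => W n
  | k'.+1 => if (k' < s)%N then W (v k') else if n' is Some n'' then W n'' else 0
  end.

Lemma iformE_chain (V : finType) (e : rel V) (b : V -> int) n n' s (v : nat -> V) (W : V -> int) :
  symmetric e -> irreflexive e -> is_node e n -> chain_hyp e b n n' s v ->
  forall j, (j < s)%N ->
  iformE e b W (v j) = yW n n' s v W j + yW n n' s v W j.+2 - b (v j) * yW n n' s v W j.+1.
Proof.
move=> hsym hirr hnd hc j hj.
rewrite iformE_nbr //.
rewrite (eq_bigl (fun u => (u == lft n v j) || (if ro n' s v j is Some r then u == r else false))); last first.
  by move=> u; rewrite hsym (nbr hsym hnd hc hj).
have e1 : yW n n' s v W j.+1 = W (v j) by rewrite /= hj.
have e0 : yW n n' s v W j = W (lft n v j).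
  by move: hj; clear e1; case: j => [|j'] //= hj'; rewrite (ltnW hj').
have e2 : yW n n' s v W j.+2 = if ro n' s v j is Some r then W r else 0.
  by rewrite /= /ro; case: (j.+1 < s)%N.
rewrite e0 e1 e2.
case E: (ro n' s v j) => [r|].
  rewrite sum2 ?(lr_neq hnd hc hj E) //; ring.
rewrite (eq_bigl (fun u => u == lft n v j)) ?big_pred1_eq; last by move=> u; rewrite orbF.
ring.
Qed.

Lemma chain_inj (V : finType) (e : rel V) (b : V -> int) n n' s (v : nat -> V) :
  chain_hyp e b n n' s v -> forall i j, (i < s)%N -> (j < s)%N -> (v i == v j) = (i == j).
Proof.
move=> [_ hinj _ _ _] i j hi hj.
apply/eqP/eqP => [|->] //; exact: hinj.
Qed.

Lemma chain_adj (V : finType) (e : rel V) (b : V -> int) n n' s (v : nat -> V) :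
  symmetric e -> is_node e n -> chain_hyp e b n n' s v ->
  forall i j, (i < s)%N -> (j < s)%N -> e (v i) (v j) = (i.+1 == j) || (j.+1 == i).
Proof.
move=> hsym hnd hc i j hi hj.
rewrite (nbr hsym hnd hc hi) [RHS]orbC; congr (_ || _).
  case: i hi => [|i] hi /=; first by rewrite (negPf (node_neq hc hnd hj)).
  rewrite (chain_inj hc) //; last exact: ltnW.
rewrite /ro; case: (ltnP i.+1 s) => hi1.
  by rewrite (chain_inj hc).
have -> : (i.+1 == j) = false by apply/eqP; lia.
case: n' hc => [n''|] hc //.
have hnd' : is_node e n'' by case: hc => _ _ _ _ [].
exact: negPf (node_neq hc hnd' hj).
Qed.

Lemma chain_det_cd (V : finType) (e : rel V) (b : V -> int) n n' s (v : nat -> V) k m :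
  symmetric e -> is_node e n -> chain_hyp e b n n' s v -> (m + k <= s)%N ->
  chain_det e b k (fun j => v (m + j)%N) = cd k (fun j => b (v (m + j)%N)).
Proof.
move=> hsym hnd hc hk.
rewrite /chain_det -det_tri; congr (\det _); apply/matrixP => i j; rewrite !mxE.
have hi : (m + i < s)%N by have := ltn_ord i; lia.
have hj : (m + j < s)%N by have := ltn_ord j; lia.
rewrite /imat (chain_inj hc) // eqn_add2l.
case: (eqVneq (i : nat) j) => [->|hij]; first by rewrite opprK.
rewrite (chain_adj hsym hnd hc hi hj) -addnS -addnS !eqn_add2l.
by case: (_ || _).
Qed.

Lemma hb_pos s (bs : nat -> int) : hb s bs -> 0 < cd s bs.
Proof.
move=> h; case: (eqVneq s 1%N) => [hs1|hs1].
  move: h; rewrite hs1 => h.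
  rewrite cd1; have := h 0%N isT => /orP [h2|/andP [_ /eqP ->]] //.
  have h1 : (2 <= bs 0%N :> int) := h2. apply: lt_le_trans h1; by [].
have [] // := @cd_pos s bs.
by move=> j hj; have := h j hj; rewrite (negPf hs1) /= orbF.
Qed.

Unset Implicit Arguments.
Set Strict Implicit.

Theorem mainTheorem6 (V : finType) (e : rel V) (b : V -> int)
    (n : V) (n' : option V) (s : nat) (v : nat -> V) (Z : V -> int) :
  is_tree e -> neg_definite e b -> is_node e n ->
  chain_hyp e b n n' s v ->
  is_laufer e b Z Z ->
  let alpha := chain_det e b s v in
  let beta := chain_det e b s.-1 (fun j => v j.+1) in
  let mn' := if n' is Some n'' then Z n'' else 0 in
  Z (v 0%N) = Num.ceil ((beta * Z n + mn')%:~R / alpha%:~R : rat).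
Proof.
move=> [[hsym hirr] _] _ hnd hc hl alpha beta mn'.
set bs := fun j => b (v j).
have Ha : alpha = cd s bs := chain_det_cd (m:=0%N) hsym hnd hc (leqnn s).
have hs : (0 < s)%N by case: hc.
have hk : (1 + s.-1 <= s)%N by lia.
have Hb : beta = cd s.-1 (fun j => bs j.+1)
  := chain_det_cd (m:=1%N) hsym hnd hc hk.
rewrite Ha Hb.
have hbs : hb s bs.
  case: n' hc {mn'} => [n''|] hc; case: (hc) => _ _ _ _ [] //.
  by move=> _ _ _ _ h2 j hj; rewrite h2.
have hpos := hb_pos hbs.
case: hl => [[_ hadm] hmin].
have hfeas : feas s bs (yW n n' s v Z).
  move=> j hj; have := hadm _ (notnode hc hj).
  rewrite (iformE_chain Z hsym hirr hnd hc hj) /bs; lia.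
have ymn : yW n n' s v Z s.+1 = mn' by rewrite /= ltnn.
clear Ha Hb alpha beta hk.
case: s hc hbs hpos hfeas ymn hs => [|s0] // hc hbs hpos hfeas ymn _.
have hlow := lower hbs hfeas.
have e0 : yW n n' s0.+1 v Z 0 = Z n by [].
have e1 : yW n n' s0.+1 v Z 1 = Z (v 0%N) by [].
rewrite ymn e0 e1 in hlow.
apply/eqP; rewrite eq_le; apply/andP; split; last first.
  by rewrite ceil_le_frac // [leRHS]mulrC.
have [y [hfy y0 y1 ey]] := achieve (Z n) mn' hbs.
rewrite -ey.
pose Z' := fun w => if [pick j : 'I_s0.+1 | v j == w] is Some j then y (nat_of_ord j).+1 else Z w.
have Z'c : forall j, (j < s0.+1)%N -> Z' (v j) = y j.+1.
  move=> j hj; rewrite /Z'; case: pickP => [i /eqP Hi | H].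
    by move/eqP: Hi; rewrite (chain_inj hc) // => /eqP ->.
  by have := H (Ordinal hj); rewrite /= eqxx.
have Z'o : forall w, (forall j, (j < s0.+1)%N -> v j != w) -> Z' w = Z w.
  move=> w hw; rewrite /Z'; case: pickP => [i /eqP Hi | //].
  by have := hw i (ltn_ord i); rewrite Hi eqxx.
have yZ : forall k, (k <= s0.+2)%N -> yW n n' s0.+1 v Z' k = y k.
  case=> [|k] hk /=; first by rewrite Z'o ?y0 // => j hj; exact: (node_neq hc hnd hj).
  case: (ltnP k s0.+1) => hk1; first exact: Z'c.
  have -> : k = s0.+1 by lia.
  rewrite y1 /mn'; case En: n' => [n''|] //.
  have hc2 := hc; rewrite En in hc2.
  have hnd2 : is_node e n'' by case: hc2 => _ _ _ _ [].
  by rewrite Z'o // => j hj; exact: (node_neq hc hnd2 hj).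
have hadm' : laufer_admissible e b Z Z'.
  split.
    by move=> w hw; apply: Z'o => j hj; exact: (node_neq hc hw hj).
  move=> w hw.
  case: (boolP [exists j : 'I_s0.+1, v j == w]) => [/existsP [j /eqP <-]|hnex].
    rewrite (iformE_chain Z' hsym hirr hnd hc (ltn_ord j)) !yZ //; last first.
    - by have := ltn_ord j; lia.
    - by have := ltn_ord j; lia.
    - by have := ltn_ord j; lia.
    have := hfy j (ltn_ord j); rewrite /bs; lia.
  have hw' : forall j, (j < s0.+1)%N -> v j != w.
    move=> j hj; apply/negP => /eqP E; move/existsP: hnex; apply.
    by exists (Ordinal hj); rewrite E.
  suff Hs : \sum_(u | e u w) Z' u = \sum_(u | e u w) Z u.
    by have := hadm w hw; rewrite !iformE_nbr // (Z'o w hw') Hs.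
  apply: eq_bigr => u heu.
  apply: Z'o => j hj; apply/eqP => E; subst u.
  have := heu; rewrite (nbr hsym hnd hc hj) => /orP [hl'|].
    case: j hj hl' {heu} => [|j] hj /= /eqP E'.
      by move: hw; rewrite E' hnd.
    by have := hw' j (ltnW hj); rewrite E' eqxx.
  rewrite /ro; case: (ltnP j.+1 s0.+1) => hj1.
    by move/eqP => E'; have := hw' _ hj1; rewrite E' eqxx.
  case En: n' => [n''|] //.
  have hc2 := hc; rewrite En in hc2.
  have hnd2 : is_node e n'' by case: hc2 => _ _ _ _ [].
  by move/eqP => E'; move: hw; rewrite E' hnd2.
have := hmin Z' hadm' (v 0%N).
by rewrite Z'c.
Qed.
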